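(* Let $n$ and $m$ be integers with $n\ge 1$ and $0\le m\le n$, and let $\theta>0$ be real. Then $$T'_{n+1,m+1}(\theta)=\frac{\theta^{m}}{(\theta+1)_n}\,\frac{1}{2\pi i}\int_{\mathcal C_R}\frac{(z+1)_n}{z^{m}}\,\frac{dz}{\theta-z},$$ for every $R$ with $0<R<\theta$, where $\mathcal C_R$ is the circle $|z|=R$ in the complex plane, traversed once counterclockwise.
   Context: For a complex number $\alpha$ and an integer $n\ge0$, the Pochhammer symbol is $(\alpha)_0=1$, $(\alpha)_n=\alpha(\alpha+1)\cdots(\alpha+n-1)$. The Stirling numbers of the first kind $S_n^{(k)}$ ($0\le k\le n$) are defined by the polynomial identity $(\theta)_n=\sum_{k=0}^n(-1)^{n-k}S_n^{(k)}\theta^k$. For integers $0\le m\le n$ and real $\theta>0$, define $$S'_{n,m}(\theta)=\frac{1}{(\theta)_n}\sum_{k=m}^n(-1)^{n-k}S_n^{(k)}\theta^k,\qquad T'_{n,m}(\theta)=1-S'_{n,m}(\theta)=\frac{1}{(\theta)_n}\sum_{k=0}^{m-1}(-1)^{n-k}S_n^{(k)}\theta^k .$$ *)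

(* Defs.v *)
From Stdlib Require Import Reals Lra Lia.
From Coquelicot Require Import Coquelicot.
Open Scope R_scope.

Fixpoint poch (a : R) (n : nat) : R :=
  match n with
  | O => 1
  | S n' => poch a n' * (a + INR n')
  end.

Fixpoint cpoch (z : C) (n : nat) : C :=
  match n with
  | O => RtoC 1
  | S n' => Cmult (cpoch z n') (Cplus z (RtoC (INR n')))
  end.

Fixpoint sum_lt (f : nat -> R) (m : nat) : R :=
  match m with
  | O => 0
  | S m' => sum_lt f m' + f m'
  end.

(** Stirling numbers of the first kind S_n^(k), normalized so that
    (theta)_n = sum_{k=0}^n (-1)^(n-k) S_n^(k) theta^k
    (lemma [poch_stirling] below), given by their standard recurrence. *)
Fixpoint stirling1 (n k : nat) : R :=
  match n, k with
  | O, O => 1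
  | O, S _ => 0
  | S _, O => 0
  | S n', S k' => stirling1 n' k' - INR n' * stirling1 n' (S k')
  end.

Lemma stirling1_gt (n k : nat) : (n < k)%nat -> stirling1 n k = 0.
Proof.
  revert k; induction n as [|n IH]; intros [|k] H; simpl; try lia; try reflexivity.
  rewrite !IH by lia. ring.
Qed.

Lemma sum_lt_ext (f g : nat -> R) m :
  (forall k, (k < m)%nat -> f k = g k) -> sum_lt f m = sum_lt g m.
Proof.
  induction m; simpl; intros H; [reflexivity|].
  rewrite IHm by (intros; apply H; lia). rewrite H by lia. reflexivity.
Qed.

Lemma sum_lt_plus f g m : sum_lt (fun k => f k + g k) m = sum_lt f m + sum_lt g m.
Proof. induction m; simpl; [ring|rewrite IHm; ring]. Qed.

Lemma sum_lt_scal c f m : sum_lt (fun k => c * f k) m = c * sum_lt f m.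
Proof. induction m; simpl; [ring|rewrite IHm; ring]. Qed.

Lemma sum_lt_shift f m : sum_lt f (S m) = f O + sum_lt (fun k => f (S k)) m.
Proof. induction m; simpl in *; [ring|rewrite IHm; ring]. Qed.

Lemma poch_stirling (theta : R) (n : nat) :
  poch theta n = sum_lt (fun k => (-1) ^ (n - k) * stirling1 n k * theta ^ k) (S n).
Proof.
  induction n as [|n IH].
  - simpl. ring.
  - set (c := fun n k => (-1) ^ (n - k) * stirling1 n k).
    assert (Hc : forall k, c (S n) (S k) = c n k + INR n * c n (S k)).
    { intros k. unfold c. simpl stirling1.
      destruct (Nat.lt_ge_cases n k) as [Hk|Hk].
      - rewrite (stirling1_gt n k Hk), (stirling1_gt n (S k)) by lia. ring.
      - replace (S n - S k)%nat with (n - k)%nat by lia.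
        destruct (Nat.eq_dec n k) as [->|Hne].
        + rewrite (stirling1_gt k (S k)) by lia. ring.
        + replace (n - k)%nat with (S (n - S k)) by lia. simpl. ring. }
    change (poch theta (S n)) with (poch theta n * (theta + INR n)).
    rewrite IH.
    change (sum_lt (fun k => (-1) ^ (S n - k) * stirling1 (S n) k * theta ^ k) (S (S n)))
      with (sum_lt (fun k => c (S n) k * theta ^ k) (S (S n))).
    change (sum_lt (fun k => (-1) ^ (n - k) * stirling1 n k * theta ^ k) (S n))
      with (sum_lt (fun k => c n k * theta ^ k) (S n)).
    rewrite (sum_lt_shift (fun k => c (S n) k * theta ^ k) (S n)).
    rewrite (sum_lt_ext (fun k => c (S n) (S k) * theta ^ S k) (fun k => c n k * theta ^ (S k) + INR n * (c n (S k) * theta ^ S k)))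
      by (intros k _; cbv beta; rewrite Hc; ring).
    rewrite sum_lt_plus, sum_lt_scal.
    assert (H0 : c (S n) O = INR n * c n O).
    { unfold c. simpl stirling1. destruct n; simpl; ring. }
    rewrite H0.
    assert (E1 : sum_lt (fun k => c n k * theta ^ S k) (S n)
                 = theta * sum_lt (fun k => c n k * theta ^ k) (S n)).
    { rewrite <- sum_lt_scal. apply sum_lt_ext. intros; simpl; ring. }
    assert (E2 : sum_lt (fun k => c n (S k) * theta ^ S k) (S n)
                 = sum_lt (fun k => c n k * theta ^ k) (S n) - c n O).
    { rewrite (sum_lt_shift (fun k => c n k * theta ^ k)).
      change (sum_lt (fun k => c n (S k) * theta ^ S k) (S n))
        with (sum_lt (fun k => c n (S k) * theta ^ S k) n + c n (S n) * theta ^ S n).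
      assert (Hz : c n (S n) = 0) by (unfold c; rewrite stirling1_gt by lia; ring).
      rewrite Hz. simpl pow. ring. }
    rewrite E1, E2. ring.
Qed.

Definition Tprime (n m : nat) (theta : R) : R :=
  / poch theta n * sum_lt (fun k => (-1) ^ (n - k) * stirling1 n k * theta ^ k) m.

(** Contour integral of f over the circle |z| = r, traversed once
    counterclockwise, parametrized by z(t) = r e^{it}, t in [0, 2 pi]:
    int_{C_r} f(z) dz = int_0^{2 pi} f(z(t)) z'(t) dt,  z'(t) = i r e^{it}. *)
Definition circle_integral (f : C -> C) (r : R) : C :=
  RInt (V := C_R_CompleteNormedModule)
    (fun t => Cmult (f (r * cos t, r * sin t)) (- r * sin t, r * cos t))
    0 (2 * PI).

(* Main.v *)
Require Import Defs.
From Stdlib Require Import Reals Lra Lia.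
From Coquelicot Require Import Coquelicot.
Open Scope R_scope.

Definition CI (f : R -> C) (l : C) := is_RInt (V := C_R_NormedModule) f 0 (2 * PI) l.

Lemma CI_pair (f : R -> C) a b :
  is_RInt (fun t => fst (f t)) 0 (2*PI) a ->
  is_RInt (fun t => snd (f t)) 0 (2*PI) b -> CI f (a, b).
Proof. intros H1 H2. exact (is_RInt_fct_extend_pair (U:=R_NormedModule) (V:=R_NormedModule) f 0 (2*PI) a b H1 H2). Qed.

Lemma CI_ext f g l : (forall t, f t = g t) -> CI f l -> CI g l.
Proof. intros H H1. unfold CI. apply is_RInt_ext with f; auto. Qed.

Lemma CI_plus f g lf lg : CI f lf -> CI g lg -> CI (fun t => Cplus (f t) (g t)) (Cplus lf lg).
Proof. intros H1 H2. exact (is_RInt_plus (V:=C_R_NormedModule) f g 0 (2*PI) lf lg H1 H2). Qed.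

Lemma scalC (k : R) (z : C) : @scal _ C_R_NormedModule k z = Cmult (RtoC k) z.
Proof. destruct z as [x y]. unfold scal; simpl. unfold prod_scal, Cmult, RtoC; simpl.
  unfold scal; simpl; unfold mult; simpl. f_equal; ring. Qed.

Lemma CI_scal (k : R) f lf : CI f lf -> CI (fun t => Cmult (RtoC k) (f t)) (Cmult (RtoC k) lf).
Proof. intros H. rewrite <- scalC. apply CI_ext with (fun t => @scal _ C_R_NormedModule k (f t)).
  intros; apply scalC. exact (is_RInt_scal (V:=C_R_NormedModule) f 0 (2*PI) k lf H). Qed.

Lemma CI_zero : CI (fun _ => RtoC 0) (RtoC 0).
Proof. unfold RtoC. apply CI_pair; simpl;
  (replace 0 with (scal (2*PI - 0) 0) at 2 by (unfold scal; simpl; unfold mult; simpl; ring));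
  apply (is_RInt_const (V:=R_NormedModule)). Qed.

Lemma RI_per (F f : R -> R) :
  (forall t, is_derive F t (f t)) -> (forall t, continuous f t) -> F (2*PI) = F 0 ->
  is_RInt f 0 (2*PI) 0.
Proof. intros H1 H2 H3.
  replace 0 with (minus (F (2*PI)) (F 0)) at 2 by (rewrite H3; unfold minus, plus, opp; simpl; ring).
  apply (is_RInt_derive (V:=R_CompleteNormedModule)); auto. Qed.

Lemma CI_pair2 (g1 g2 : R -> R) a b :
  is_RInt g1 0 (2*PI) a -> is_RInt g2 0 (2*PI) b -> CI (fun t => (g1 t, g2 t)) (a, b).
Proof. intros; apply CI_pair; auto. Qed.

Lemma per_cos k : cos (INR k * (2*PI)) = cos 0.
Proof. replace (INR k * (2*PI)) with (0 + 2 * INR k * PI) by ring. apply cos_period. Qed.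
Lemma per_sin k : sin (INR k * (2*PI)) = sin 0.
Proof. replace (INR k * (2*PI)) with (0 + 2 * INR k * PI) by ring. apply sin_period. Qed.

Lemma cont_sin c k t : continuous (fun t => c * sin (INR k * t)) t.
Proof. apply (ex_derive_continuous (K:=R_AbsRing) (V:=R_NormedModule)). auto_derive. auto. Qed.
Lemma cont_cos c k t : continuous (fun t => c * cos (INR k * t)) t.
Proof. apply (ex_derive_continuous (K:=R_AbsRing) (V:=R_NormedModule)). auto_derive. auto. Qed.

Lemma RI_sin c k : (1 <= k)%nat -> is_RInt (fun t => c * sin (INR k * t)) 0 (2*PI) 0.
Proof. intros Hk. assert (HK : INR k <> 0) by (apply not_0_INR; lia).
  apply RI_per with (fun t => - c * cos (INR k * t) / INR k).
  - intros t. auto_derive; auto. field. auto.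
  - intros; apply cont_sin.
  - rewrite per_cos. f_equal. f_equal. f_equal. f_equal. ring.
Qed.
Lemma RI_cos c k : (1 <= k)%nat -> is_RInt (fun t => c * cos (INR k * t)) 0 (2*PI) 0.
Proof. intros Hk. assert (HK : INR k <> 0) by (apply not_0_INR; lia).
  apply RI_per with (fun t => c * sin (INR k * t) / INR k).
  - intros t. auto_derive; auto. field. auto.
  - intros; apply cont_cos.
  - rewrite per_sin. f_equal. f_equal. f_equal. f_equal. ring.
Qed.

Definition zt (r t : R) : C := (r * cos t, r * sin t).
Definition dz (r t : R) : C := (- r * sin t, r * cos t).

Lemma demoivre r t j : Cpow (zt r t) j = (r ^ j * cos (INR j * t), r ^ j * sin (INR j * t)).
Proof. induction j.
  - simpl. rewrite Rmult_0_l, cos_0, sin_0. unfold RtoC. f_equal; ring.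
  - simpl Cpow. rewrite IHj. rewrite S_INR. 
    replace ((INR j + 1) * t) with (t + INR j * t) by ring.
    rewrite cos_plus, sin_plus. unfold zt, Cmult; simpl. f_equal; ring.
Qed.

Lemma Mpos r j : CI (fun t => Cmult (Cpow (zt r t) j) (dz r t)) (RtoC 0).
Proof.
  apply CI_ext with (fun t => (-(r ^ S j) * sin (INR (S j) * t), r ^ S j * cos (INR (S j) * t))).
  - intros t. rewrite demoivre. rewrite S_INR.
    replace ((INR j + 1) * t) with (t + INR j * t) by ring.
    rewrite cos_plus, sin_plus. unfold dz, Cmult; simpl. f_equal; ring.
  - apply (CI_pair2 (fun t => -(r ^ S j) * sin (INR (S j) * t)) (fun t => r ^ S j * cos (INR (S j) * t)));
     [apply RI_sin | apply RI_cos]; lia.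
Qed.

Lemma Cinv_uniq (w v : C) : w <> RtoC 0 -> Cmult w v = RtoC 1 -> Cinv w = v.
Proof. intros H1 H2. transitivity (Cmult (Cinv w) (Cmult w v)).
  rewrite H2. field. auto. field. auto. Qed.

Lemma zt_neq0 r t : 0 < r -> zt r t <> RtoC 0.
Proof. intros Hr H. unfold zt, RtoC in H. injection H as H1 H2.
  assert (r * r * (sin t ^ 2 + cos t ^ 2) = 0).
  { replace (r*r*(sin t ^2 + cos t ^2)) with ((r * cos t)^2 + (r*sin t)^2) by ring.
    rewrite H1, H2. ring. }
  pose proof (sin2_cos2 t) as E. unfold Rsqr in E. nra.
Qed.

Lemma Cpow_neq0 z j : z <> RtoC 0 -> Cpow z j <> RtoC 0.
Proof. intros H. induction j; simpl.
  - intro E. unfold RtoC in E. injection E. lra.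
  - apply Cmult_neq_0; auto. Qed.

Lemma Mneg r q : 0 < r ->
  CI (fun t => Cmult (Cinv (Cpow (zt r t) (S q))) (dz r t))
     (match q with O => (0, 2*PI) | _ => RtoC 0 end).
Proof. intros Hr.
  assert (E : forall t, Cinv (Cpow (zt r t) (S q)) =
     (/ r ^ S q * cos (INR (S q) * t), - / r ^ S q * sin (INR (S q) * t))).
  { intros t. apply Cinv_uniq. apply Cpow_neq0, zt_neq0; auto.
    rewrite demoivre. set (a := INR (S q) * t). unfold Cmult, RtoC; cbn [fst snd].
    assert (r ^ S q <> 0) by (apply pow_nonzero; lra).
    f_equal.
    - match goal with |- ?L = _ => replace L with (sin a * sin a + cos a * cos a) by (field; auto) end.
      pose proof (sin2_cos2 a) as E; unfold Rsqr in E; lra.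
    - field. auto. }
  apply CI_ext with (fun t => (/ r ^ q * sin (INR q * t), / r ^ q * cos (INR q * t))).
  - intros t. rewrite E. rewrite S_INR.
    replace ((INR q + 1) * t) with (t + INR q * t) by ring.
    rewrite cos_plus, sin_plus. unfold dz, Cmult; cbn [fst snd].
    assert (r ^ q <> 0) by (apply pow_nonzero; lra).
    pose proof (sin2_cos2 t) as E2; unfold Rsqr in E2. 
    replace (r ^ S q) with (r * r ^ q) by (simpl; ring).
    f_equal.
    + match goal with |- _ = ?L => replace L with ((sin t * sin t + cos t * cos t) * (/ r ^ q * sin (INR q * t))) by (field; split; lra) end.
      rewrite E2; ring.
    + match goal with |- _ = ?L => replace L with ((sin t * sin t + cos t * cos t) * (/ r ^ q * cos (INR q * t))) by (field; split; lra) end.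
      rewrite E2; ring.
  - destruct q.
    + apply (CI_pair2 (fun t => / r ^ 0 * sin (INR 0 * t)) (fun t => / r ^ 0 * cos (INR 0 * t))).
      * apply is_RInt_ext with (fun _ => 0). intros x _. replace (INR 0 * x) with 0 by (simpl; ring). rewrite sin_0. rewrite Rmult_0_r; reflexivity.
        replace 0 with (scal (2*PI - 0) 0) at 2 by (unfold scal; simpl; unfold mult; simpl; ring).
        apply (is_RInt_const (V:=R_NormedModule)).
      * apply is_RInt_ext with (fun _ => 1). intros x _. replace (INR 0 * x) with 0 by (simpl; ring). rewrite cos_0. simpl. rewrite Rinv_1, Rmult_1_r; reflexivity.
        replace (2*PI) with (scal (2*PI - 0) 1) at 2 by (unfold scal; simpl; unfold mult; simpl; ring).
        apply (is_RInt_const (V:=R_NormedModule)).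
    + apply (CI_pair2 (fun t => / r ^ S q * sin (INR (S q) * t)) (fun t => / r ^ S q * cos (INR (S q) * t)));
      [apply RI_sin | apply RI_cos]; lia.
Qed.

Lemma cos_lt r th t : 0 < r -> r < th -> 0 < th - r * cos t.
Proof. intros. pose proof (COS_bound t). assert (r * cos t <= r) by nra. lra. Qed.

Lemma Kpt r th t : 0 < r -> r < th -> 
  (- th * r * sin t / ((th - r * cos t)^2 + (r * sin t)^2),
   (th * r * cos t - r ^ 2 * (cos t ^ 2 + sin t ^ 2)) / ((th - r * cos t)^2 + (r * sin t)^2)) =
  Cmult (Cinv (Cminus (RtoC th) (zt r t))) (dz r t).
Proof. intros Hr Hth. pose proof (cos_lt r th t Hr Hth).
    assert (0 < (th - r * cos t)^2 + (r * sin t)^2) by nra.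
    unfold Cinv, Cminus, Cplus, Copp, Cmult, RtoC, zt, dz; cbn [fst snd].
    apply injective_projections; cbn [fst snd]; field; nra.
Qed.

Lemma K00 r th : 0 < r -> r < th ->
  CI (fun t => Cmult (Cinv (Cminus (RtoC th) (zt r t))) (dz r t)) (RtoC 0).
Proof. intros Hr Hth.
  apply CI_ext with (fun t => (- th * r * sin t / ((th - r * cos t)^2 + (r * sin t)^2),
                              (th * r * cos t - r ^ 2 * (cos t ^ 2 + sin t ^ 2)) / ((th - r * cos t)^2 + (r * sin t)^2))).
  - intros t. apply Kpt; auto.
  - apply (CI_pair2 (fun t => - th * r * sin t / ((th - r * cos t)^2 + (r * sin t)^2))
                    (fun t => (th * r * cos t - r ^ 2 * (cos t ^ 2 + sin t ^ 2)) / ((th - r * cos t)^2 + (r * sin t)^2))).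
    + apply RI_per with (fun t => - / 2 * ln ((th - r * cos t)^2 + (r * sin t)^2)).
      * intros t. pose proof (cos_lt r th t Hr Hth). auto_derive.
        -- nra.
        -- field. nra.
      * intros t. pose proof (cos_lt r th t Hr Hth).
        apply (ex_derive_continuous (K:=R_AbsRing) (V:=R_NormedModule)). auto_derive. nra.
      * rewrite cos_2PI, sin_2PI, cos_0, sin_0. reflexivity.
    + apply RI_per with (fun t => atan (r * sin t / (th - r * cos t))).
      * intros t. pose proof (cos_lt r th t Hr Hth). auto_derive.
        -- lra.
        -- assert (th + - (r * cos t) <> 0) by lra. field; repeat split; try lra; try nra.
      * intros t. pose proof (cos_lt r th t Hr Hth).
        apply (ex_derive_continuous (K:=R_AbsRing) (V:=R_NormedModule)). auto_derive. nra.
      * rewrite cos_2PI, sin_2PI, cos_0, sin_0. reflexivity.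
Qed.

Definition hh th r j m t := Cmult (Cdiv (Cdiv (Cpow (zt r t) j) (Cpow (zt r t) m)) (Cminus (RtoC th) (zt r t))) (dz r t).

Definition VV th q : C := match q with O => RtoC 0 | S _ => (0, 2 * PI / th ^ q) end.

Lemma CI_lin (al be : R) f g a b :
  CI f a -> CI g b -> CI (fun t => Cplus (Cmult (RtoC al) (f t)) (Cmult (RtoC be) (g t)))
    (Cplus (Cmult (RtoC al) a) (Cmult (RtoC be) b)).
Proof. intros; apply CI_plus; apply CI_scal; auto. Qed.

Lemma CI_val f l l' : CI f l -> l = l' -> CI f l'.
Proof. intros H ->; auto. Qed.

Lemma thz_neq0 th r t : 0 < r -> r < th -> Cminus (RtoC th) (zt r t) <> RtoC 0.
Proof. intros Hr Hth E. pose proof (cos_lt r th t Hr Hth). unfold Cminus, Cplus, Copp, RtoC, zt in E.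
  injection E as E1 E2. lra. Qed.

Lemma Kj0 th r j : 0 < r -> r < th -> CI (hh th r j 0) (RtoC 0).
Proof. intros Hr Hth. induction j.
  - apply CI_ext with (fun t => Cmult (Cinv (Cminus (RtoC th) (zt r t))) (dz r t)).
    + intros t. unfold hh. cbn [Cpow]. pose proof (thz_neq0 th r t Hr Hth). field. auto.
    + apply K00; auto.
  - apply CI_val with (Cplus (Cmult (RtoC th) (RtoC 0)) (Cmult (RtoC (-1)) (RtoC 0))).
    + apply CI_ext with (fun t => Cplus (Cmult (RtoC th) (hh th r j 0 t)) (Cmult (RtoC (-1)) (Cmult (Cpow (zt r t) j) (dz r t)))).
      * intros t. unfold hh. cbn [Cpow]. pose proof (thz_neq0 th r t Hr Hth).
        replace (RtoC (-1)) with (Copp (RtoC 1)) by (unfold RtoC, Copp; cbn [fst snd]; f_equal; ring). field. auto.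
      * apply CI_lin; [exact IHj | exact (Mpos r j)].
    + unfold RtoC, Cplus, Cmult; cbn [fst snd]. f_equal; ring.
Qed.

Lemma K0q th r q : 0 < r -> r < th -> CI (hh th r 0 q) (VV th q).
Proof. intros Hr Hth. induction q.
  - apply Kj0; auto.
  - apply CI_val with (Cplus (Cmult (RtoC (/ th)) (VV th q)) (Cmult (RtoC (/ th)) (match q with O => (0, 2*PI) | _ => RtoC 0 end))).
    + apply CI_ext with (fun t => Cplus (Cmult (RtoC (/ th)) (hh th r 0 q t)) (Cmult (RtoC (/ th)) (Cmult (Cinv (Cpow (zt r t) (S q))) (dz r t)))).
      * intros t. unfold hh. cbn [Cpow]. pose proof (thz_neq0 th r t Hr Hth).
        pose proof (zt_neq0 r t Hr). pose proof (Cpow_neq0 _ q H0).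
        assert (RtoC th <> RtoC 0) by (intro E; injection E; lra).
        rewrite (RtoC_inv th) by (intro; lra). field. repeat split; auto.
      * apply CI_lin; [exact IHq | exact (Mneg r q Hr)].
    + destruct q; unfold VV, RtoC, Cplus, Cmult; cbn [fst snd pow]; f_equal. all: try field. all: repeat split; try (apply pow_nonzero); intro; lra.
Qed.

Lemma Cpow_add z a b : Cpow z (a + b) = Cmult (Cpow z a) (Cpow z b).
Proof. induction a; cbn [Cpow Nat.add]. ring. rewrite IHa. ring. Qed.

Lemma Kjm th r j m : 0 < r -> r < th -> CI (hh th r j m) (VV th (m - j)).
Proof. intros Hr Hth. destruct (Nat.le_gt_cases m j) as [H|H].
  - replace (m - j)%nat with 0%nat by lia.
    apply CI_ext with (hh th r (j - m) 0).
    + intros t. unfold hh. pose proof (zt_neq0 r t Hr) as Hz.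
      pose proof (thz_neq0 th r t Hr Hth). pose proof (Cpow_neq0 _ m Hz).
      replace j with (m + (j - m))%nat at 2 by lia. rewrite Cpow_add. cbn [Cpow].
      field. auto.
    + apply Kj0; auto.
  - apply CI_ext with (hh th r 0 (m - j)).
    + intros t. unfold hh. pose proof (zt_neq0 r t Hr) as Hz.
      pose proof (thz_neq0 th r t Hr Hth). pose proof (Cpow_neq0 _ j Hz).
      pose proof (Cpow_neq0 _ (m - j) Hz).
      replace m with (j + (m - j))%nat at 2 by lia. rewrite Cpow_add. cbn [Cpow].
      field. repeat split; auto.
    + apply K0q; auto.
Qed.

Fixpoint csum (f : nat -> C) n : C := match n with O => RtoC 0 | S n' => Cplus (csum f n') (f n') end.

Lemma csum_ext f g n : (forall k, (k < n)%nat -> f k = g k) -> csum f n = csum g n.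
Proof. induction n; simpl; intros H; auto. rewrite IHn by (intros; apply H; lia). rewrite H by lia. auto. Qed.
Lemma csum_plus f g n : csum (fun k => Cplus (f k) (g k)) n = Cplus (csum f n) (csum g n).
Proof. induction n; simpl. unfold RtoC, Cplus; simpl; f_equal; ring. rewrite IHn; ring. Qed.
Lemma csum_scal c f n : csum (fun k => Cmult c (f k)) n = Cmult c (csum f n).
Proof. induction n; simpl. unfold RtoC, Cmult; simpl; f_equal; ring. rewrite IHn; ring. Qed.
Lemma csum_shift f n : csum f (S n) = Cplus (f O) (csum (fun k => f (S k)) n).
Proof. induction n; simpl in *. unfold RtoC, Cplus; simpl; f_equal; ring. rewrite IHn; ring. Qed.
Lemma csum_RtoC f n : csum (fun k => RtoC (f k)) n = RtoC (sum_lt f n).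
Proof. induction n; simpl; auto. rewrite IHn, RtoC_plus; auto. Qed.

Definition aa n j := (-1) ^ (n - j) * stirling1 (S n) (S j).

Lemma aa_top n : aa n (S n) = 0.
Proof. unfold aa. rewrite stirling1_gt by lia. ring. Qed.

Lemma aa_0 n : aa (S n) 0 = INR (S n) * aa n 0.
Proof. unfold aa. replace (S n - 0)%nat with (S n) by lia. replace (n - 0)%nat with n by lia.
  change (stirling1 (S (S n)) 1) with (stirling1 (S n) 0 - INR (S n) * stirling1 (S n) 1).
  change (stirling1 (S n) 0) with 0. simpl pow. ring. Qed.

Lemma aa_rec n j : aa (S n) (S j) = aa n j + INR (S n) * aa n (S j).
Proof. unfold aa.
  change (stirling1 (S (S n)) (S (S j))) with (stirling1 (S n) (S j) - INR (S n) * stirling1 (S n) (S (S j))).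
  destruct (Nat.lt_ge_cases n j) as [Hk|Hk].
  - rewrite !(stirling1_gt (S n)) by lia. ring.
  - replace (S n - S j)%nat with (n - j)%nat by lia.
    destruct (Nat.eq_dec n j) as [->|Hne].
    + rewrite (stirling1_gt (S j) (S (S j))) by lia. ring.
    + replace (n - j)%nat with (S (n - S j)) by lia. simpl. ring.
Qed.

Lemma cpoch_exp n z : cpoch (Cplus z (RtoC 1)) n = csum (fun j => Cmult (RtoC (aa n j)) (Cpow z j)) (S n).
Proof. induction n.
  - simpl. unfold aa. simpl. unfold RtoC, Cplus, Cmult; simpl; f_equal; ring.
  - set (g := fun j => Cmult (RtoC (aa n j)) (Cpow z j)).
    change (cpoch (Cplus z (RtoC 1)) (S n)) with (Cmult (cpoch (Cplus z (RtoC 1)) n) (Cplus (Cplus z (RtoC 1)) (RtoC (INR n)))).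
    rewrite IHn. fold g.
    rewrite (csum_shift (fun j => Cmult (RtoC (aa (S n) j)) (Cpow z j))).
    rewrite (csum_ext (fun k => Cmult (RtoC (aa (S n) (S k))) (Cpow z (S k))) (fun k => Cplus (Cmult z (g k)) (Cmult (RtoC (INR (S n))) (g (S k))))).
    2:{ intros k _. unfold g. cbv beta. rewrite aa_rec. cbn [Cpow]. rewrite RtoC_plus, RtoC_mult. ring. }
    rewrite csum_plus, !csum_scal.
    assert (E : csum (fun k => g (S k)) (S n) = Cminus (csum g (S n)) (g O)).
    { assert (E1 := csum_shift g (S n)).
      change (csum g (S (S n))) with (Cplus (csum g (S n)) (g (S n))) in E1.
      assert (g (S n) = RtoC 0) by (unfold g; rewrite aa_top; unfold RtoC, Cmult; simpl; f_equal; ring).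
      rewrite H in E1. 
      replace (csum (fun k => g (S k)) (S n)) with (Cminus (Cplus (g O) (csum (fun k => g (S k)) (S n))) (g O)) by ring.
      rewrite <- E1. ring. }
    rewrite E. rewrite aa_0. unfold g. cbn [Cpow]. rewrite S_INR, RtoC_mult, RtoC_plus. ring.
Qed.

Lemma CI_csum (c : nat -> R) (f : nat -> R -> C) (v : nat -> C) N :
  (forall j, CI (f j) (v j)) ->
  CI (fun t => csum (fun j => Cmult (RtoC (c j)) (f j t)) N) (csum (fun j => Cmult (RtoC (c j)) (v j)) N).
Proof. intros H. induction N; simpl.
  - apply CI_zero.
  - apply CI_plus; [exact IHN | apply CI_scal; apply H]. Qed.

Lemma csum_div g A B D N :
  Cmult (Cdiv (Cdiv (csum g N) A) B) D = csum (fun j => Cmult (Cdiv (Cdiv (g j) A) B) D) N.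
Proof. induction N; simpl.
  - unfold Cdiv, RtoC, Cmult; simpl; f_equal; ring.
  - rewrite <- IHN. unfold Cdiv. ring. Qed.

Definition W : C := Cmult (RtoC (2 * PI)) Ci.

Lemma W_neq0 : W <> RtoC 0.
Proof. unfold W. apply Cmult_neq_0.
  - intro E. injection E. pose proof PI_RGT_0. lra.
  - intro E. injection E. lra. Qed.

Lemma VV_eq th j m : 0 < th -> VV th (m - j) = Cmult W (RtoC (if Nat.ltb j m then / th ^ (m - j) else 0)).
Proof. intros Hth. destruct (Nat.ltb_spec j m).
  - destruct (m - j)%nat eqn:E; [lia|].
    unfold VV, W, RtoC, Cmult, Ci; cbn [fst snd]. f_equal; field; apply pow_nonzero; lra.
  - replace (m - j)%nat with 0%nat by lia. unfold VV, W, RtoC, Cmult, Ci; cbn [fst snd]. f_equal; ring.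
Qed.

Lemma sum_lt_cut0 f m N : sum_lt (fun j => if Nat.ltb j m then f j else 0) N = sum_lt f (Nat.min N m).
Proof. induction N.
  - reflexivity.
  - simpl sum_lt at 1. rewrite IHN. destruct (Nat.ltb_spec N m).
    + replace (Nat.min (S N) m) with (S N) by lia. replace (Nat.min N m) with N by lia. reflexivity.
    + replace (Nat.min (S N) m) with m by lia. replace (Nat.min N m) with m by lia. ring.
Qed.

Lemma sum_lt_cut f m N : (m <= N)%nat -> sum_lt (fun j => if Nat.ltb j m then f j else 0) N = sum_lt f m.
Proof. intros H. rewrite sum_lt_cut0. f_equal. lia. Qed.

Lemma poch_shift a n : poch a (S n) = a * poch (a + 1) n.
Proof. induction n.
  - simpl. ring.
  - change (poch a (S (S n))) with (poch a (S n) * (a + INR (S n))).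
    rewrite IHn. simpl poch at 2. rewrite S_INR. ring. Qed.

Lemma poch_pos a n : 0 < a -> 0 < poch a n.
Proof. intros Ha. induction n; simpl. lra. pose proof (pos_INR n). nra. Qed.

Lemma real_part n m th : (m <= n)%nat -> 0 < th ->
  Tprime (S n) (S m) th = th ^ m / poch (th + 1) n * sum_lt (fun j => aa n j * / th ^ (m - j)) m.
Proof. intros Hm Hth. unfold Tprime. rewrite poch_shift.
  pose proof (poch_pos (th + 1) n ltac:(lra)).
  rewrite sum_lt_shift. simpl stirling1 at 1.
  rewrite (sum_lt_ext _ (fun k => th * (aa n k * th ^ k))).
  2:{ intros k _. unfold aa. replace (S n - S k)%nat with (n - k)%nat by lia. simpl pow at 2. ring. }
  rewrite sum_lt_scal.
  rewrite (sum_lt_ext (fun j => aa n j * / th ^ (m - j)) (fun j => / th ^ m * (aa n j * th ^ j))).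
  2:{ intros k Hk. replace (th ^ m) with (th ^ k * th ^ (m - k)) by (rewrite <- pow_add; f_equal; lia).
      field. split; apply pow_nonzero; lra. }
  rewrite sum_lt_scal. field. split; [apply pow_nonzero; lra | split; intro; lra].
Qed.

Theorem corollary1 (n m : nat) (theta r : R) :
  (1 <= n)%nat -> (m <= n)%nat -> 0 < theta -> 0 < r -> r < theta ->
  RtoC (Tprime (S n) (S m) theta) =
  Cmult (RtoC (theta ^ m / poch (theta + 1) n))
    (Cmult (Cinv (Cmult (RtoC (2 * PI)) Ci))
       (circle_integral
          (fun z => Cdiv (Cdiv (cpoch (Cplus z (RtoC 1)) n) (Cpow z m))
                         (Cminus (RtoC theta) z))
          r)).
Proof.
  intros Hn Hm Hth Hr Hrt.
  set (F := fun z => Cdiv (Cdiv (cpoch (Cplus z (RtoC 1)) n) (Cpow z m)) (Cminus (RtoC theta) z)).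
  assert (HI : CI (fun t => Cmult (F (zt r t)) (dz r t))
                  (csum (fun j => Cmult (RtoC (aa n j)) (VV theta (m - j))) (S n))).
  { apply CI_ext with (fun t => csum (fun j => Cmult (RtoC (aa n j)) (hh theta r j m t)) (S n)).
    - intros t. unfold F. rewrite cpoch_exp, csum_div. apply csum_ext. intros k _.
      unfold hh, Cdiv. ring.
    - apply CI_csum. intros j. apply Kjm; auto. }
  assert (HV : circle_integral F r = csum (fun j => Cmult (RtoC (aa n j)) (VV theta (m - j))) (S n)).
  { unfold circle_integral. exact (is_RInt_unique (V:=C_R_CompleteNormedModule) _ _ _ _ HI). }
  rewrite HV.
  rewrite (csum_ext _ (fun j => Cmult W (RtoC (if Nat.ltb j m then aa n j * / theta ^ (m - j) else 0)))).
  2:{ intros k _. rewrite VV_eq by lra. destruct (Nat.ltb k m).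
      - rewrite RtoC_mult. ring.
      - unfold RtoC, W, Cmult; cbn [fst snd]; f_equal; ring. }
  rewrite csum_scal, csum_RtoC, sum_lt_cut by lia.
  rewrite real_part by auto.
  fold W. pose proof W_neq0. rewrite RtoC_mult. field. auto.
Qed.
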